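(* Let $M$ be a monoid with identity $1$ (not necessarily finite). (i) If $M$ is a group, then $\sigma_m(M)=\sigma_m^*(M)=\sigma_s(M)$. (ii) If $S=M-\{1\}$ is nonempty and is a subsemigroup of $M$, then $\sigma_m^*(M)\le\sigma_m(M)=\sigma_s(S)$ and $\sigma_s(M)=2$. (iii) If $M$ is not a group and $M-\{1\}$ is not a nonempty subsemigroup of $M$, then $\sigma_m(M)=\sigma_m^*(M)=\sigma_s(M)=2$.
   Context: A subsemigroup is a nonempty subset closed under the operation. For a monoid $M$: a submonoid is a subsemigroup containing the identity of $M$; a monoidal subsemigroup is a subsemigroup that is a monoid in its own right (its identity need not be that of $M$). $\sigma_s(M)$, $\sigma_m(M)$, $\sigma_m^*(M)$ denote the least positive integer $n$ such that $M$ is the union of $n$ proper subsemigroups, proper submonoids, respectively proper monoidal subsemigroups; each is $\infty$ if no such finite $n$ exists. For a semigroup $S$, $\sigma_s(S)$ is defined analogously with proper subsemigroups. *)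

(* Defs.v *)
Set Implicit Arguments.
(* A (possibly infinite) monoid is given by a carrier T, an operation mul and
   an identity one; subsets are predicates T -> Prop.
   Covering numbers are encoded as a relation with values in option nat,
   where None stands for infinity. *)

Section Defs.
Variables (T : Type) (mul : T -> T -> T) (one : T).

Definition is_monoid : Prop :=
  (forall x y z, mul x (mul y z) = mul (mul x y) z) /\
  (forall x, mul one x = x) /\ (forall x, mul x one = x).

Definition is_group : Prop :=
  forall x, exists y, mul x y = one /\ mul y x = one.

Definition fullset : T -> Prop := fun _ => True.

Definition subsemigroup_in (U A : T -> Prop) : Prop :=
  (forall x, A x -> U x) /\ (exists x, A x) /\
  (forall x y, A x -> A y -> A (mul x y)).

Definition submonoid (A : T -> Prop) : Prop :=
  subsemigroup_in fullset A /\ A one.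

Definition monoidal_subsemigroup (A : T -> Prop) : Prop :=
  subsemigroup_in fullset A /\
  exists e, A e /\ forall x, A x -> mul e x = x /\ mul x e = x.

Definition proper_in (U A : T -> Prop) : Prop := exists x, U x /\ ~ A x.

Definition coverable (U : T -> Prop) (P : (T -> Prop) -> Prop) (n : nat) : Prop :=
  exists A : nat -> T -> Prop,
    (forall i, i < n -> P (A i) /\ proper_in U (A i)) /\
    (forall x, U x -> exists i, i < n /\ A i x).

Definition is_cover_number (U : T -> Prop) (P : (T -> Prop) -> Prop)
    (k : option nat) : Prop :=
  match k with
  | Some n => 0 < n /\ coverable U P n /\
              (forall m, 0 < m -> m < n -> ~ coverable U P m)
  | None => forall n, 0 < n -> ~ coverable U P n
  end.

Definition sigma_s_is (k : option nat) : Prop :=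
  is_cover_number fullset (subsemigroup_in fullset) k.
Definition sigma_m_is (k : option nat) : Prop :=
  is_cover_number fullset submonoid k.
Definition sigma_mstar_is (k : option nat) : Prop :=
  is_cover_number fullset monoidal_subsemigroup k.
Definition sigma_s_sub_is (S : T -> Prop) (k : option nat) : Prop :=
  is_cover_number S (subsemigroup_in S) k.

End Defs.

Definition le_ext (a b : option nat) : Prop :=
  match a, b with
  | _, None => True
  | None, Some _ => False
  | Some m, Some n => m <= n
  end.

(* Main.v *)
Require Import Defs.
From Stdlib Require Import Classical ClassicalEpsilon Lia.

Lemma cov_mono (T : Type) (U : T -> Prop) (P Q : (T -> Prop) -> Prop) n :
  (forall A, P A -> Q A) -> coverable U P n -> coverable U Q n.
Proof.
  intros H [A [H1 H2]]. exists A; split; auto.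
  intros i Hi; destruct (H1 i Hi); split; auto.
Qed.

Lemma cn_transfer (T : Type) (U U' : T -> Prop) (P Q : (T -> Prop) -> Prop) :
  (forall n, coverable U P n <-> coverable U' Q n) ->
  forall k, is_cover_number U P k <-> is_cover_number U' Q k.
Proof.
  intros H [n|]; simpl; split.
  - intros [h1 [h2 h3]]; repeat split; auto. apply H; auto.
    intros m a b c; apply (h3 m a b); apply H; auto.
  - intros [h1 [h2 h3]]; repeat split; auto. apply H; auto.
    intros m a b c; apply (h3 m a b); apply H; auto.
  - intros h m a b; apply (h m a); apply H; auto.
  - intros h m a b; apply (h m a); apply H; auto.
Qed.

Lemma not_cov1 (T : Type) (P : (T -> Prop) -> Prop) :
  ~ coverable (@fullset T) P 1.
Proof.
  intros [A [H1 H2]]. destruct (H1 0 ltac:(lia)) as [_ [x [_ Hx]]].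
  destruct (H2 x I) as [i [Hi Ax]]. assert (i = 0) by lia. subst; auto.
Qed.

Lemma cov2 (T : Type) (P : (T -> Prop) -> Prop) :
  coverable (@fullset T) P 2 -> is_cover_number (@fullset T) P (Some 2).
Proof.
  intros H; simpl; repeat split; auto.
  intros m a b c. assert (m = 1) by lia; subst. exact (not_cov1 _ _ c).
Qed.

Lemma cov2_mk (T : Type) (P : (T -> Prop) -> Prop) (A B : T -> Prop) :
  P A -> P B -> (exists x, ~ A x) -> (exists x, ~ B x) ->
  (forall x, A x \/ B x) -> coverable (@fullset T) P 2.
Proof.
  intros pa pb [a na] [b nb] cv.
  exists (fun i => match i with 0 => A | _ => B end). split.
  - intros [|[|i]] Hi; [split; [auto| exists a; split; [exact I|auto]]
                      |split; [auto| exists b; split; [exact I|auto]]|lia].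
  - intros x _. destruct (cv x); [exists 0|exists 1]; split; auto.
Qed.

Theorem mainTheorem4 (T : Type) (mul : T -> T -> T) (one : T)
  (HM : is_monoid mul one) :
  let S := fun x : T => x <> one in
  (* (i) *)
  (is_group mul one ->
     forall k, (sigma_m_is mul one k <-> sigma_mstar_is mul k) /\
               (sigma_m_is mul one k <-> sigma_s_is mul k)) /\
  (* (ii) *)
  ((exists x, S x) -> subsemigroup_in mul (@fullset T) S ->
     (forall a b, sigma_mstar_is mul a -> sigma_m_is mul one b -> le_ext a b) /\
     (forall k, sigma_m_is mul one k <-> sigma_s_sub_is mul S k) /\
     sigma_s_is mul (Some 2)) /\
  (* (iii) *)
  (~ is_group mul one ->
   ~ ((exists x, S x) /\ subsemigroup_in mul (@fullset T) S) ->
     sigma_m_is mul one (Some 2) /\ sigma_mstar_is mul (Some 2) /\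
     sigma_s_is mul (Some 2)).
Proof.
  destruct HM as [Hass [Hl Hr]]. intros S.
  assert (m_ms : forall A, submonoid mul one A -> monoidal_subsemigroup mul A).
  { intros A [H1 H2]. split; auto. exists one; split; auto. }
  assert (ms_s : forall A, monoidal_subsemigroup mul A -> subsemigroup_in mul (@fullset T) A).
  { intros A [H1 _]; auto. }
  assert (m_s : forall A, submonoid mul one A -> subsemigroup_in mul (@fullset T) A).
  { intros A [H1 _]; auto. }
  split; [|split].
  -
    intros G.
    assert (key : forall n, coverable (@fullset T) (subsemigroup_in mul (@fullset T)) n ->
                            coverable (@fullset T) (submonoid mul one) n).
    { intros n [A [H1 H2]].
      exists (fun i x => A i x \/ x = one). split.
      - intros i Hi. destruct (H1 i Hi) as [[_ [[z Hz] Hc]] [y [_ Hy]]].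
        split.
        + split; [|auto]. split; [intros; exact I|]. split; [exists one; auto|].
          intros x w [Hx|Hx] [Hw|Hw]; subst.
          * left; auto.
          * rewrite Hr; auto.
          * rewrite Hl; auto.
          * rewrite Hl; auto.
        +
          apply NNPP; intro N.
          assert (all : forall w, w <> one -> A i w).
          { intros w hw. apply NNPP; intro nw. apply N. exists w; split; [exact I|].
            intros [h|h]; auto. }
          assert (ey : y = one) by (apply NNPP; intro h; apply Hy; auto).
          subst y.
          assert (nz : z <> one) by (intro; subst; auto).
          destruct (G z) as [z' [f1 f2]].
          assert (nz' : z' <> one) by (intro e; rewrite e, Hr in f1; auto).
          apply Hy. rewrite <- f1. apply Hc; auto.
      - intros x _. destruct (H2 x I) as [i [Hi Ax]]; exists i; auto. }
    intros k; split; apply cn_transfer; intro n; split; intro C.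
    + exact (cov_mono _ _ _ _ n m_ms C).
    + apply key. exact (cov_mono _ _ _ _ n ms_s C).
    + exact (cov_mono _ _ _ _ n m_s C).
    + apply key; exact C.
  - intros [x0 Sx0] [_ [_ HS]]. split; [|split].
    + intros a b Ha Hb. destruct b as [n|]; [|destruct a; exact I].
      destruct Hb as [n0 [Cn _]].
      destruct a as [m|]; simpl in Ha.
      * destruct Ha as [m0 [_ Hm]]. simpl.
        destruct (Compare_dec.le_lt_dec m n) as [h|h]; auto.
        exfalso. apply (Hm n n0 h). exact (cov_mono _ _ _ _ n m_ms Cn).
      * exact (Ha n n0 (cov_mono _ _ _ _ n m_ms Cn)).
    + apply cn_transfer. intro n; split.
      * intros [A [H1 H2]].
        destruct (H2 x0 I) as [j [Hj Aj]].
        exists (fun i x => (if excluded_middle_informative (exists y, A i y /\ S y)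
                           then A i x else A j x) /\ S x).
        split.
        -- intros i Hi.
           assert (gen : forall l, l < n -> (exists y, A l y /\ S y) ->
              subsemigroup_in mul S (fun x => A l x /\ S x) /\ proper_in S (fun x => A l x /\ S x)).
           { intros l Hl0 [y [Ay Sy]]. destruct (H1 l Hl0) as [[[_ [_ Hc]] Ho] [w [_ Hw]]].
             split.
             - split; [intros x [_ h]; exact h|]. split; [exists y; auto|].
               intros u v [Au Su] [Av Sv]; split; auto.
             - exists w. split; [intro e; rewrite e in Hw; auto|]. intros [h _]; auto. }
           destruct (excluded_middle_informative (exists y, A i y /\ S y)) as [e|e].
           ++ apply gen; auto.
           ++ apply gen; auto. exists x0; auto.
        -- intros x Sx. destruct (H2 x I) as [i [Hi Ax]]. exists i; split; auto.
           destruct (excluded_middle_informative (exists y, A i y /\ S y)) as [e|e].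
           ++ auto.
           ++ exfalso; apply e; exists x; auto.
      * intros [B [H1 H2]].
        exists (fun i x => B i x \/ x = one). split.
        -- intros i Hi. destruct (H1 i Hi) as [[_ [[z Hz] Hc]] [w [Sw Hw]]].
           split.
           ++ split; [|auto]. split; [intros; exact I|]. split; [exists one; auto|].
              intros x y [Hx|Hx] [Hy|Hy].
              ** left; auto.
              ** rewrite Hy, Hr; auto.
              ** rewrite Hx, Hl; auto.
              ** rewrite Hx, Hl; auto.
           ++ exists w; split; [exact I|]. intros [h|h]; auto.
        -- intros x _. destruct (H2 x0 Sx0) as [j [Hj _]].
           destruct (classic (x = one)) as [e|e].
           ++ exists j; auto.
           ++ destruct (H2 x e) as [i [Hi Bx]]; exists i; auto.
    + apply cov2. apply (cov2_mk _ _ S (fun x => x = one)).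
      * split; [intros; exact I|]. split; [exists x0; auto|]. auto.
      * split; [intros; exact I|]. split; [exists one; auto|].
        intros x y e1 e2; rewrite e1, e2, Hl; auto.
      * exists one. unfold S; auto.
      * exists x0. auto.
      * intro x. destruct (classic (x = one)); auto.
  - intros NG NS.
    assert (ab : exists a b, a <> one /\ b <> one /\ mul a b = one).
    { apply NNPP; intro N. apply NS. split.
      - apply NNPP; intro N2. apply NG. intro x. exists x.
        assert (x = one) by (apply NNPP; intro h; apply N2; exists x; auto).
        subst x. rewrite Hl; auto.
      - split; [intros; exact I|]. split.
        + apply NNPP; intro N2. apply NG. intro x. exists x.
          assert (x = one) by (apply NNPP; intro h; apply N2; exists x; auto).
          subst x. rewrite Hl; auto.
        + intros x y hx hy e. apply N. exists x, y; auto. }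
    destruct ab as [a [b [na [nb eab]]]].
    assert (C2 : coverable (@fullset T) (submonoid mul one) 2).
    { destruct (classic (exists x, forall y, mul x y <> one)) as [[x0 Hx0]|NR].
      - set (R := fun x => exists y, mul x y = one).
        apply (cov2_mk _ _ R (fun x => ~ R x \/ x = one)).
        + split; [|exists one; rewrite Hl; auto].
          split; [intros; exact I|]. split; [exists one; exists one; rewrite Hl; auto|].
          intros x y [x' ex] [y' ey]. exists (mul y' x').
          rewrite <- Hass, (Hass y y' x'), ey, Hl; auto.
        + split; [|auto]. split; [intros; exact I|]. split; [exists one; auto|].
          intros x y [Hx|Hx] [Hy|Hy].
          * left. intros [z ez]. apply Hx. exists (mul y z). rewrite Hass; auto.
          * rewrite Hy, Hr; auto.
          * rewrite Hx, Hl; auto.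
          * rewrite Hx, Hl; auto.
        + exists x0. intros [y ey]; apply (Hx0 y); auto.
        + exists a. intros [h|h]; auto. apply h. exists b; auto.
        + intro x. destruct (classic (R x)); auto.
      - set (L := fun x => exists y, mul y x = one).
        apply (cov2_mk _ _ L (fun x => ~ L x \/ x = one)).
        + split; [|exists one; rewrite Hl; auto].
          split; [intros; exact I|]. split; [exists one; exists one; rewrite Hl; auto|].
          intros x y [x' ex] [y' ey]. exists (mul y' x').
          rewrite <- Hass, (Hass x' x y), ex, Hl; auto.
        + split; [|auto]. split; [intros; exact I|]. split; [exists one; auto|].
          intros x y [Hx|Hx] [Hy|Hy].
          * left. intros [z ez]. apply Hy. exists (mul z x). rewrite <- Hass; auto.
          * rewrite Hy, Hr; auto.
          * rewrite Hx, Hl; auto.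
          * rewrite Hx, Hl; auto.
        + apply NNPP; intro N. apply NG. intro x.
          assert (rx : exists y, mul x y = one).
          { apply NNPP; intro h. apply NR. exists x. intros y ey. apply h; exists y; auto. }
          assert (lx : L x).
          { apply NNPP; intro h. apply N. exists x; auto. }
          destruct rx as [y ey]. destruct lx as [z ez]. exists y; split; auto.
          assert (zy : z = y).
          { rewrite <- (Hr z), <- ey, Hass, ez, Hl; auto. }
          rewrite <- zy; auto.
        + exists b. intros [h|h]; auto. apply h. exists a; auto.
        + intro x. destruct (classic (L x)); auto. }
    split; [|split]; apply cov2.
    + exact C2.
    + exact (cov_mono _ _ _ _ 2 m_ms C2).
    + exact (cov_mono _ _ _ _ 2 m_s C2).
Qed.
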